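(* Let $\mathcal{H}$ be a hedgehog with support function $h$ and let $k>2$ be an integer. Then the $k$th Order Midpoint Set of $\mathcal{H}$ is parameterized by \[ \Omega_{\mathcal{H},k}(s)=\frac{2}{k}\sum_{j=1}^{k}h\Big(s+\frac{2\pi j}{k}\Big)\Big(\cos\Big(s+\frac{2\pi j}{k}\Big),\sin\Big(s+\frac{2\pi j}{k}\Big)\Big),\qquad s\in\Big[0,\frac{2\pi}{k}\Big]; \] that is, for every $s$, the center of mass of the equiangular $k$-gon circumscribed about $\mathcal{H}$ at parameter $s$ equals the right-hand side.
   Context: Write $u(s)=(\cos s,\sin s)$, $u'(s)=(-\sin s,\cos s)$. A hedgehog is a closed planar curve determined by a smooth $2\pi$-periodic function $h$ (its support function) via $\mathcal{H}(s)=h(s)u(s)+h'(s)u'(s)$. For $s\in\mathbb{R}$ and $j\in\mathbb{Z}$ let $\ell_j(s)=\{x:\langle x,u(s+\tfrac{2\pi j}{k})\rangle=h(s+\tfrac{2\pi j}{k})\}$ (support lines). The equiangular $k$-gon circumscribed about $\mathcal{H}$ at parameter $s$ has vertices $v_j(s)=\ell_j(s)\cap\ell_{j+1}(s)$, $j=0,\dots,k-1$ (indices mod $k$), and its center of mass is $\frac1k\sum_{j=0}^{k-1}v_j(s)$. The $k$th Order Midpoint Set $\Omega_{\mathcal{H},k}$ is the set of centers of mass of all these equiangular circumscribed $k$-gons. *)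

(* Defs.v *)
From Stdlib Require Import Reals Lra List.
From Coquelicot Require Import Coquelicot.
Open Scope R_scope.

Definition pt := (R * R)%type.

Definition dot (x y : pt) : R := fst x * fst y + snd x * snd y.

Definition u (s : R) : pt := (cos s, sin s).

Definition smooth (h : R -> R) : Prop :=
  forall (n : nat) (x : R), ex_derive (Derive_n h n) x.

Definition periodic_2pi (h : R -> R) : Prop :=
  forall x : R, h (x + 2 * PI) = h x.

(* angle of the j-th support line of the equiangular k-gon at parameter s *)
Definition theta (k : nat) (s : R) (j : nat) : R := s + 2 * PI * INR j / INR k.

Definition on_support_line (h : R -> R) (k : nat) (s : R) (j : nat) (x : pt) : Prop :=
  dot x (u (theta k s j)) = h (theta k s j).

Definition fsum (f : nat -> R) (lo n : nat) : R :=
  fold_right Rplus 0 (map f (seq lo n)).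

Definition center_of_mass (k : nat) (v : nat -> pt) : pt :=
  (fsum (fun j => fst (v j)) 0 k / INR k, fsum (fun j => snd (v j)) 0 k / INR k).

Definition midpoint_param (h : R -> R) (k : nat) (s : R) : pt :=
  (2 / INR k * fsum (fun j => h (theta k s j) * cos (theta k s j)) 1 k,
   2 / INR k * fsum (fun j => h (theta k s j) * sin (theta k s j)) 1 k).

(* Main.v *)
Require Import Defs.
From Stdlib Require Import Reals Lra Lia List.
From Coquelicot Require Import Coquelicot.
Open Scope R_scope.

Lemma fsum_S (f : nat -> R) lo n : fsum f lo (S n) = f lo + fsum f (S lo) n.
Proof. reflexivity. Qed.

Lemma fsum_Sr (f : nat -> R) lo n : fsum f lo (S n) = fsum f lo n + f (lo + n)%nat.
Proof.
  revert lo; induction n; intros lo.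
  - unfold fsum; simpl. rewrite Nat.add_0_r. ring.
  - rewrite fsum_S, IHn, fsum_S. replace (S lo + n)%nat with (lo + S n)%nat by lia. ring.
Qed.

Lemma fsum_ext (f g : nat -> R) lo n :
  (forall j, (lo <= j < lo + n)%nat -> f j = g j) -> fsum f lo n = fsum g lo n.
Proof.
  revert lo; induction n; intros lo H; [reflexivity|].
  rewrite !fsum_S, H by lia. rewrite IHn; [reflexivity|]. intros; apply H; lia.
Qed.

Lemma fsum_minus (f g : nat -> R) lo n :
  fsum (fun j => f j - g j) lo n = fsum f lo n - fsum g lo n.
Proof.
  revert lo; induction n; intros lo; [unfold fsum; simpl; ring|].
  rewrite !fsum_S, IHn. ring.
Qed.

Lemma fsum_scal (c : R) (f : nat -> R) lo n :
  fsum (fun j => c * f j) lo n = c * fsum f lo n.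
Proof.
  revert lo; induction n; intros lo; [unfold fsum; simpl; ring|].
  rewrite !fsum_S, IHn. ring.
Qed.

Lemma fsum_shift (g : nat -> R) lo n :
  fsum (fun j => g (S j)) lo n = fsum g (S lo) n.
Proof.
  revert lo; induction n; intros lo; [reflexivity|].
  rewrite !fsum_S, IHn. reflexivity.
Qed.

Lemma fsum_rot (f : nat -> R) k : f O = f k -> fsum f 0 k = fsum f 1 k.
Proof.
  intros H. destruct k; [reflexivity|].
  rewrite fsum_S, fsum_Sr. rewrite H. simpl. ring.
Qed.

Theorem proposition4p5 (h : R -> R) (k : nat)
  (Hsmooth : smooth h) (Hper : periodic_2pi h) (Hk : (2 < k)%nat)
  (s : R) (v : nat -> pt)
  (Hv : forall j : nat, (j < k)%nat ->
        on_support_line h k s j (v j) /\ on_support_line h k s (S j) (v j)) :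
  center_of_mass k v = midpoint_param h k s.
Proof.
  set (a := 2 * PI / INR k).
  assert (Hk3 : 3 <= INR k) by (replace 3 with (INR 3) by (simpl; ring); apply le_INR; lia).
  assert (Hkne : INR k <> 0) by lra.
  assert (Hth : forall j, theta k s (S j) = theta k s j + a).
  { intros j; unfold theta, a; rewrite S_INR; field; auto. }
  assert (Hthm : forall j, (1 <= j)%nat -> theta k s (j - 1) = theta k s j - a).
  { intros j Hj; unfold theta, a; rewrite minus_INR by lia; simpl; field; auto. }
  assert (Hthk : theta k s k = theta k s 0 + 2 * PI).
  { unfold theta; simpl; field; auto. }
  assert (Hthk1 : theta k s (S k) = theta k s 1 + 2 * PI).
  { rewrite Hth, Hthk, (Hth 0%nat). ring. }
  assert (Hsa : sin a <> 0).
  { assert (0 < a < PI).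
    { pose proof PI_RGT_0. assert (a * INR k = 2 * PI) by (unfold a; field; auto).
      split. unfold a; apply Rdiv_lt_0_compat; lra. nra. }
    apply Rgt_not_eq, sin_gt_0; lra. }
  set (H := fun j => h (theta k s j)).
  set (C := fun j => cos (theta k s j)).
  set (S_ := fun j => sin (theta k s j)).
  assert (HX : forall j, (j < k)%nat ->
     sin a * fst (v j) = H j * S_ (S j) - H (S j) * S_ j /\
     sin a * snd (v j) = H (S j) * C j - H j * C (S j)).
  { intros j Hj. destruct (Hv j Hj) as [E0 E1].
    unfold on_support_line, dot, u in E0, E1; simpl in E0, E1.
    unfold H, C, S_. rewrite <- E0, <- E1, !Hth in *.
    rewrite sin_plus, cos_plus.
    pose proof (sin2_cos2 (theta k s j)) as Hsc. unfold Rsqr in Hsc.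
    destruct (v j) as [x y]; simpl.
    split.
    - replace (sin a * x) with (sin a * x * (sin (theta k s j) * sin (theta k s j) + cos (theta k s j) * cos (theta k s j))) by (rewrite Hsc; ring). ring.
    - replace (sin a * y) with (sin a * y * (sin (theta k s j) * sin (theta k s j) + cos (theta k s j) * cos (theta k s j))) by (rewrite Hsc; ring). ring. }
  assert (Hp0 : forall g : R -> R, (forall x, g (x + 2 * PI) = g x) -> g (theta k s k) = g (theta k s 0) /\ g (theta k s (S k)) = g (theta k s 1)).
  { intros g Hg. rewrite Hthk, Hthk1, !Hg. split; reflexivity. }
  assert (HsinP : forall x, sin (x + 2 * PI) = sin x).
  { intros x. rewrite sin_plus, sin_2PI, cos_2PI. ring. }
  assert (HcosP : forall x, cos (x + 2 * PI) = cos x).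
  { intros x. rewrite cos_plus, sin_2PI, cos_2PI. ring. }
  destruct (Hp0 h Hper) as [Hh0 Hh1].
  destruct (Hp0 sin HsinP) as [Hs0 Hs1].
  destruct (Hp0 cos HcosP) as [Hc0 Hc1].
  unfold center_of_mass, midpoint_param. fold H C S_.
  f_equal.
  - assert (E : fsum (fun j => fst (v j)) 0 k = 2 * fsum (fun j => H j * C j) 1 k).
    { apply (Rmult_eq_reg_l (sin a)); auto.
      rewrite <- fsum_scal.
      rewrite (fsum_ext _ (fun j => H j * S_ (S j) - H (S j) * S_ j)) by (intros; apply HX; lia).
      rewrite fsum_minus.
      rewrite (fsum_rot (fun j => H j * S_ (S j))) by (unfold H, S_; rewrite Hh0, Hs1; reflexivity).
      replace (fsum (fun j => H (S j) * S_ j) 0 k) with (fsum (fun j => H j * S_ (j-1)%nat) 1 k) by (rewrite <- fsum_shift; apply fsum_ext; intros; simpl; rewrite Nat.sub_0_r; reflexivity).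
      rewrite <- fsum_minus, <- !fsum_scal.
      apply fsum_ext. intros j Hj. unfold S_, C.
      rewrite Hth, Hthm by lia. rewrite sin_plus, sin_minus. ring. }
    rewrite E. unfold H, C, S_, Rdiv. ring.
  - assert (E : fsum (fun j => snd (v j)) 0 k = 2 * fsum (fun j => H j * S_ j) 1 k).
    { apply (Rmult_eq_reg_l (sin a)); auto.
      rewrite <- fsum_scal.
      rewrite (fsum_ext _ (fun j => H (S j) * C j - H j * C (S j))) by (intros; apply HX; lia).
      rewrite fsum_minus.
      rewrite (fsum_rot (fun j => H j * C (S j))) by (unfold H, C; rewrite Hh0, Hc1; reflexivity).
      replace (fsum (fun j => H (S j) * C j) 0 k) with (fsum (fun j => H j * C (j-1)%nat) 1 k) by (rewrite <- fsum_shift; apply fsum_ext; intros; simpl; rewrite Nat.sub_0_r; reflexivity).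
      rewrite <- fsum_minus, <- !fsum_scal.
      apply fsum_ext. intros j Hj. unfold S_, C.
      rewrite Hth, Hthm by lia. rewrite cos_plus, cos_minus. ring. }
    rewrite E. unfold H, C, S_, Rdiv. ring.
Qed.
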